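(* Let $d=5$ and $n\ge4$. Let $(p_1,\dots,p_n)\in V(I_{5,n})$ and $z_1,\dots,z_n\in\mathbb{C}^4$. For each $j\in\{1,\dots,n\}$, let $W_j$ be the $4\times n$ matrix with columns $|1\rangle,\dots,|j-1\rangle,z_j,|j+1\rangle,\dots,|n\rangle$, and $M^{(j)}=W_j^T\,C\,P_j\,W_j$. Then $M^{(j)}$ is skew symmetric of rank $\le2$, and its entries are $M^{(j)}_{ik}=\langle ijk\rangle$ for $i,k\ne j$, $M^{(j)}_{ij}=\langle ij\rangle$ for $i\ne j$, $M^{(j)}_{jk}=\langle jk\rangle$ for $k\neq j$, and $M^{(j)}_{jj}=0$. In particular all $4\times4$ Pfaffians of $M^{(j)}$ vanish. Furthermore, the $n\times(n^2+n)$ matrix $(S\,|\,T_1\,|\,\cdots\,|\,T_n)$ has rank $\le4$.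
   Context: $x\cdot y=-x_1y_1+x_2y_2+\cdots+x_5y_5$ on $\mathbb{C}^5$; $V(I_{5,n})$ is the set of $(p_1,\dots,p_n)\in(\mathbb{C}^5)^n$ with $p_i\cdot p_i=0$ for all $i$ and $\sum_ip_i=0$. Dirac matrices for $d=5$ ($4\times4$): with $A=\begin{pmatrix}0&1\\-1&0\end{pmatrix}$, $B=\begin{pmatrix}0&1\\1&0\end{pmatrix}$ and $\otimes$ the Kronecker product, $\Gamma_1=A\otimes\mathrm{diag}(-1,1)$, $\Gamma_2=B\otimes\mathrm{diag}(-1,1)$, $\Gamma_3=\mathrm{Id}_2\otimes B$, $\Gamma_4=\mathrm{Id}_2\otimes\begin{pmatrix}0&-i\\i&0\end{pmatrix}$, $\Gamma_5=-i\,\Gamma_1\Gamma_2\Gamma_3\Gamma_4$. Charge conjugation matrix $C=\Gamma_4\Gamma_1$. $P_i=-p_{i1}\Gamma_1+p_{i2}\Gamma_2+\cdots+p_{i5}\Gamma_5$, $|i\rangle=P_iz_i$, $\langle ij\rangle=|i\rangle^TC|j\rangle$, $\langle ijk\rangle=|i\rangle^TCP_j|k\rangle$, $S=(\langle ij\rangle)_{i,j}$, $T_j=(\langle ijk\rangle)_{i,k}$. *)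

(* Defs.v *)
From mathcomp Require Import all_boot all_order all_algebra.
Set Implicit Arguments. Unset Strict Implicit. Unset Printing Implicit Defensive.
Import Order.TTheory GRing.Theory Num.Theory.
Local Open Scope ring_scope.

Section Spinors.
Variable C : numClosedFieldType.

(* vectors of C^5 are functions 'I_5 -> C; component k (1-based in the
   paper) is x (inord (k-1)) *)
Definition cmp (x : 'I_5 -> C) (k : nat) : C := x (inord k.-1).

Definition mdot (x y : 'I_5 -> C) : C :=
  - cmp x 1 * cmp y 1 + cmp x 2 * cmp y 2 + cmp x 3 * cmp y 3
  + cmp x 4 * cmp y 4 + cmp x 5 * cmp y 5.

Definition in_V (n : nat) (p : 'I_n -> 'I_5 -> C) : Prop :=
  (forall i, mdot (p i) (p i) = 0) /\ (forall k : 'I_5, \sum_(i < n) p i k = 0).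

Definition mx2 (a b c d : C) : 'M[C]_2 :=
  \matrix_(r < 2, s < 2)
    if (r == 0 :> nat) then (if (s == 0 :> nat) then a else b)
    else (if (s == 0 :> nat) then c else d).

Definition kron2 (A B : 'M[C]_2) : 'M[C]_4 :=
  \matrix_(r < 4, s < 4)
    (A (inord (r %/ 2)) (inord (s %/ 2)) * B (inord (r %% 2)) (inord (s %% 2))).

Definition mA : 'M[C]_2 := mx2 0 1 (-1) 0.
Definition mB : 'M[C]_2 := mx2 0 1 1 0.
Definition dm1 : 'M[C]_2 := mx2 (-1) 0 0 1.
Definition sy : 'M[C]_2 := mx2 0 (- 'i) 'i 0.

Definition G1 : 'M[C]_4 := kron2 mA dm1.
Definition G2 : 'M[C]_4 := kron2 mB dm1.
Definition G3 : 'M[C]_4 := kron2 1%:M mB.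
Definition G4 : 'M[C]_4 := kron2 1%:M sy.
Definition G5 : 'M[C]_4 := (- 'i) *: (G1 *m G2 *m G3 *m G4).

Definition Cmat : 'M[C]_4 := G4 *m G1.

Definition Pm (x : 'I_5 -> C) : 'M[C]_4 :=
  - (cmp x 1 *: G1) + cmp x 2 *: G2 + cmp x 3 *: G3 + cmp x 4 *: G4 + cmp x 5 *: G5.

Variables (n : nat) (p : 'I_n -> 'I_5 -> C) (z : 'I_n -> 'cV[C]_4).

Definition ket (i : 'I_n) : 'cV[C]_4 := Pm (p i) *m z i.

Definition br2 (i j : 'I_n) : C := ((ket i)^T *m Cmat *m ket j) 0 0.

Definition br3 (i j k : 'I_n) : C := ((ket i)^T *m Cmat *m Pm (p j) *m ket k) 0 0.

Definition Smat : 'M[C]_n := \matrix_(i < n, j < n) br2 i j.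
Definition Tmat (j : 'I_n) : 'M[C]_n := \matrix_(i < n, k < n) br3 i j k.

Definition Wmat (j : 'I_n) : 'M[C]_(4, n) :=
  \matrix_(r < 4, c < n) (if c == j then z j else ket c) r 0.

Definition Mj (j : 'I_n) : 'M[C]_n := (Wmat j)^T *m Cmat *m Pm (p j) *m Wmat j.

(* (S | T_1 | ... | T_n): row i is (row i of S) followed by the rows i of
   T_1, ..., T_n; column n + (j*n + k) holds (T_j)_{ik} (mxvec is row-major) *)
Definition STmat : 'M[C]_(n, n + n * n) :=
  row_mx Smat (\matrix_(i < n) mxvec (\matrix_(j < n, k < n) Tmat j i k)).

End Spinors.

Definition pf4 (C : numClosedFieldType) (n : nat) (M : 'M[C]_n) (a b c d : 'I_n) : C :=
  M a b * M c d - M a c * M b d + M a d * M b c.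

(* Main.v *)
Require Import Defs.
From mathcomp Require Import all_boot all_order all_algebra.
From mathcomp Require Import ring zify.
Import Order.TTheory GRing.Theory Num.Theory.
Local Open Scope ring_scope.


Section Gen.
Variable R : comRingType.
Definition mkA (b01 b02 b03 b12 b13 b23 : R) : 'M[R]_4 :=
  \matrix_(r < 4, s < 4) nth 0 (nth [::] [:: [:: 0; b01; b02; b03]; [:: -b01; 0; b12; b13];
     [:: -b02; -b12; 0; b23]; [:: -b03; -b13; -b23; 0]] r) s.
Definition mkv (l : seq R) : 'cV[R]_4 := \matrix_(r < 4, c < 1) nth 0 l r.
Lemma pf_gram (b01 b02 b03 b12 b13 b23 x0 x1 x2 x3 y0 y1 y2 y3 z0 z1 z2 z3 w0 w1 w2 w3 : R) :
  let g (u v : 'cV[R]_4) := (u^T *m mkA b01 b02 b03 b12 b13 b23 *m v) 0 0 in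
  let X := mkv [:: x0; x1; x2; x3] in let Y := mkv [:: y0; y1; y2; y3] in
  let Z := mkv [:: z0; z1; z2; z3] in let W := mkv [:: w0; w1; w2; w3] in
  g X Y * g Z W - g X Z * g Y W + g X W * g Y Z =
  (b01 * b23 - b02 * b13 + b03 * b12) *
  (x0*y1*z2*w3 - x0*y1*z3*w2 - x0*y2*z1*w3 + x0*y2*z3*w1 + x0*y3*z1*w2 - x0*y3*z2*w1 - x1*y0*z2*w3 + x1*y0*z3*w2 + x1*y2*z0*w3 - x1*y2*z3*w0 - x1*y3*z0*w2 + x1*y3*z2*w0 + x2*y0*z1*w3 - x2*y0*z3*w1 - x2*y1*z0*w3 + x2*y1*z3*w0 + x2*y3*z0*w1 - x2*y3*z1*w0 - x3*y0*z1*w2 + x3*y0*z2*w1 + x3*y1*z0*w2 - x3*y1*z2*w0 - x3*y2*z0*w1 + x3*y2*z1*w0).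
Proof. rewrite /= !(mxE, big_ord_recl, big_ord0) /=. ring. Qed.
Lemma vecE (u : 'cV[R]_4) : u = mkv [:: u (inord 0) 0; u (inord 1) 0; u (inord 2) 0; u (inord 3) 0].
Proof.
apply/matrixP => r c; rewrite (ord1 c) mxE.
by case: r => [[|[|[|[|//]]]] ?]; congr (u _ _); apply/val_inj; rewrite /= inordK.
Qed.
End Gen.
Arguments mkA {R}.
Arguments mkv {R}.
Arguments vecE {R}.
Section S.
Variable C : numClosedFieldType.
Definition mk4 (l : seq (seq C)) : 'M[C]_4 := \matrix_(r < 4, s < 4) nth 0 (nth [::] l r) s.
Lemma hi : 'i * 'i = -1 :> C. Proof. by rewrite -expr2 sqrCi. Qed.
Lemma inord2 (a b : nat) : (a < 2)%N -> (b < 2)%N -> ((inord a : 'I_2) == inord b) = (a == b).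
Proof. by move=> ha hb; rewrite -(inj_eq val_inj) /= !inordK. Qed.
Ltac ent := apply/matrixP; case => [[|[|[|[|//]]]] ?]; case => [[|[|[|[|//]]]] ?];
 rewrite !(mxE, big_ord_recl, big_ord0) /= ?inordK ?inord2 //=; try ring: hi.
Lemma G1E : G1 C = mk4 [:: [:: 0; 0; -1; 0]; [:: 0;0;0;1]; [:: 1;0;0;0]; [:: 0;-1;0;0]].
Proof. ent. Qed.
Lemma G2E : G2 C = mk4 [:: [:: 0; 0; -1; 0]; [:: 0;0;0;1]; [:: -1;0;0;0]; [:: 0;1;0;0]].
Proof. ent. Qed.
Lemma G3E : G3 C = mk4 [:: [:: 0; 1; 0; 0]; [:: 1;0;0;0]; [:: 0;0;0;1]; [:: 0;0;1;0]].
Proof. ent. Qed.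
Lemma G4E : G4 C = mk4 [:: [:: 0; -'i; 0; 0]; [:: 'i;0;0;0]; [:: 0;0;0;-'i]; [:: 0;0;'i;0]].
Proof. ent. Qed.
Lemma G12E : G1 C *m G2 C = mk4 [:: [:: 1; 0; 0; 0]; [:: 0;1;0;0]; [:: 0;0;-1;0]; [:: 0;0;0;-1]].
Proof. rewrite G1E G2E. ent. Qed.
Lemma G123E : G1 C *m G2 C *m G3 C = mk4 [:: [:: 0; 1; 0; 0]; [:: 1;0;0;0]; [:: 0;0;0;-1]; [:: 0;0;-1;0]].
Proof. rewrite G12E G3E. ent. Qed.
Lemma G1234E : G1 C *m G2 C *m G3 C *m G4 C = mk4 [:: [:: 'i; 0; 0; 0]; [:: 0;-'i;0;0]; [:: 0;0;-'i;0]; [:: 0;0;0;'i]].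
Proof. rewrite G123E G4E. ent. Qed.
Lemma G5E : G5 C = mk4 [:: [:: 1; 0; 0; 0]; [:: 0;-1;0;0]; [:: 0;0;-1;0]; [:: 0;0;0;1]].
Proof. rewrite /G5 G1234E. ent. Qed.
Lemma CmatE : Cmat C = mk4 [:: [:: 0; 0; 0; -'i]; [:: 0;0;-'i;0]; [:: 0;'i;0;0]; [:: 'i;0;0;0]].
Proof. rewrite /Cmat G4E G1E. ent. Qed.
Definition Pe (x : 'I_5 -> C) := let a1 := cmp x 1 in let a2 := cmp x 2 in let a3 := cmp x 3 in
  let a4 := cmp x 4 in let a5 := cmp x 5 in
  mk4 [:: [:: a5; a3 - 'i*a4; a1 - a2; 0]; [:: a3 + 'i*a4; -a5; 0; -a1+a2];
          [:: -a1-a2; 0; -a5; a3 - 'i*a4]; [:: 0; a1+a2; a3+'i*a4; a5]].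
Lemma PmE (x : 'I_5 -> C) : Pm x = Pe x.
Proof. rewrite /Pm /Pe G1E G2E G3E G4E G5E. ent. Qed.
Lemma KC : (Cmat C)^T = - Cmat C.
Proof. rewrite CmatE. ent. Qed.
Lemma KA x : (Cmat C *m Pm x)^T = - (Cmat C *m Pm x).
Proof. rewrite CmatE PmE /Pe. ent. Qed.
Lemma KS (x : 'I_5 -> C) : Pm x *m Pm x = mdot x x *: 1%:M.
Proof. rewrite PmE /Pe /mdot. ent. Qed.
End S.

Section M.
Variable C : numClosedFieldType.

Lemma CP_E (x : 'I_5 -> C) : Cmat C *m Pm x =
  mkA (- 'i * (cmp x 1 + cmp x 2)) (- 'i * (cmp x 3 + 'i * cmp x 4)) (- 'i * cmp x 5)
      ('i * cmp x 5) (- 'i * (cmp x 3 - 'i * cmp x 4)) ('i * (- cmp x 1 + cmp x 2)).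
Proof.
rewrite CmatE PmE /Pe /mkA.
apply/matrixP; case => [[|[|[|[|//]]]] ?]; case => [[|[|[|[|//]]]] ?];
 rewrite !(mxE, big_ord_recl, big_ord0) /=; ring: (hi C).
Qed.

Lemma pfG (x : 'I_5 -> C) (u1 u2 u3 u4 : 'cV[C]_4) : mdot x x = 0 ->
  let g (u v : 'cV[C]_4) := (u^T *m (Cmat C *m Pm x) *m v) 0 0 in
  g u1 u2 * g u3 u4 - g u1 u3 * g u2 u4 + g u1 u4 * g u2 u3 = 0.
Proof.
move=> hm /=; rewrite CP_E (vecE u1) (vecE u2) (vecE u3) (vecE u4) pf_gram.
have -> : forall a b : C, a * b = (a * b) by [].
apply/eqP; rewrite mulf_eq0; apply/orP; left; apply/eqP.
rewrite -hm /mdot; ring: (hi C).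
Qed.
End M.


Lemma gram_entry (C : numClosedFieldType) n (A : 'M[C]_(4, n)) (B : 'M[C]_4) i k :
  (A^T *m B *m A) i k = ((col i A)^T *m B *m col k A) 0 0.
Proof.
rewrite !mxE; apply: eq_bigr => r _; rewrite !mxE; congr (_ * _).
by apply: eq_bigr => s _; rewrite !mxE.
Qed.

Lemma col_W (C : numClosedFieldType) n (p : 'I_n -> 'I_5 -> C) z j c :
  col c (Wmat p z j) = if c == j then z j else ket p z c.
Proof. by apply/matrixP => r s; rewrite (ord1 s) !mxE. Qed.

Lemma Mj_entry (C : numClosedFieldType) n (p : 'I_n -> 'I_5 -> C) z j i k :
  Mj p z j i k = ((col i (Wmat p z j))^T *m (Cmat C *m Pm (p j)) *m col k (Wmat p z j)) 0 0.
Proof. by rewrite -gram_entry /Mj mulmxA. Qed.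

Theorem mainTheorem10 (C : numClosedFieldType) (n : nat) (hn : (4 <= n)%N)
  (p : 'I_n -> 'I_5 -> C) (z : 'I_n -> 'cV[C]_4) :
  in_V p ->
  (forall j : 'I_n,
     (Mj p z j)^T = - Mj p z j
     /\ (\rank (Mj p z j) <= 2)%N
     /\ (forall i k : 'I_n, i != j -> k != j -> Mj p z j i k = br3 p z i j k)
     /\ (forall i : 'I_n, i != j -> Mj p z j i j = br2 p z i j)
     /\ (forall k : 'I_n, k != j -> Mj p z j j k = br2 p z j k)
     /\ Mj p z j j j = 0
     /\ (forall a b c d : 'I_n, (a < b)%N -> (b < c)%N -> (c < d)%N ->
           pf4 (Mj p z j) a b c d = 0))
  /\ (\rank (STmat p z) <= 4)%N.
Proof.
move=> [hnull hsum]; split.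
  move=> j.

  have hPP : Pm (p j) *m Pm (p j) = 0 by rewrite KS hnull scale0r.
  have hPC : (Pm (p j))^T *m Cmat C = Cmat C *m Pm (p j).
    apply: oppr_inj; rewrite -(KA _ (p j)) trmx_mul KC mulmxN //.
  have hT : (Mj p z j)^T = - Mj p z j.
    by rewrite /Mj -(mulmxA _ (Cmat C)) trmx_mul [(_ *m (Cmat C *m _))^T]trmx_mul trmxK KA mulNmx mulmxN !mulmxA.
  split; first exact: hT.
  split.
    rewrite /Mj; apply: leq_trans (mxrankM_maxl _ _) _.
    apply: leq_trans (mxrankM_maxr _ _) _.
    have := mxrank_mul_min (Pm (p j)) (Pm (p j)); rewrite hPP mxrank0; lia.
  split.
    move=> i k hi hk; rewrite Mj_entry !col_W (negPf hi) (negPf hk) /br3.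
    by rewrite !mulmxA.
  split.
    move=> i hi; rewrite Mj_entry !col_W (negPf hi) eqxx /br2 /ket.
    by rewrite !mulmxA.
  split.
    move=> k hk; rewrite Mj_entry !col_W (negPf hk) eqxx /br2 /ket.
    by rewrite trmx_mul -(mulmxA _ _ (Cmat C)) hPC.
  split.
    have := congr1 (fun M : 'M_n => M j j) hT; rewrite /= [LHS]mxE [RHS]mxE => h.
    have : Mj p z j j j *+ 2 == 0 by rewrite mulr2n {1}h addNr.
    by rewrite mulrn_eq0 => /eqP.
  move=> a b c d _ _ _.
  rewrite /pf4 !Mj_entry.
  apply: pfG; exact: hnull.
set K := \matrix_(r < 4, c < n) ket p z c r 0.
have colK c : col c K = ket p z c by apply/matrixP => r s; rewrite (ord1 s) !mxE.
set Y := \matrix_(r < 4) mxvec (\matrix_(j < n, k < n) (Cmat C *m (Pm (p j) *m ket p z k)) r 0).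
have -> : STmat p z = K^T *m row_mx (Cmat C *m K) Y.
  rewrite /STmat mul_mx_row; congr row_mx.
    apply/matrixP => i k; rewrite mulmxA gram_entry !colK mxE //.
  apply/matrixP => i c; case/mxvec_indexP: c => j k.
  rewrite [LHS]mxE mxvecE [LHS]mxE [LHS]mxE /br3.
  rewrite -(mulmxA _ (Pm (p j))) -(mulmxA _ (Cmat C)) [LHS]mxE [RHS]mxE.
  apply: eq_bigr => r _; congr (_ * _); first by rewrite !mxE.
  by rewrite [RHS]mxE mxvecE mxE.
apply: leq_trans (mxrankM_maxl _ _) _; exact: rank_leq_col.
Qed.
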